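(* Let $p=\alpha(\alpha+1)>2$ with $\alpha>0$, let $c_p=\frac{1+z_p}{1-z_p}$, $a_p=h_{c_p}'(z_p)/L_\alpha'(z_p)$, and let $\ell_p$ be the tangent line to the graph of $h_{c_p}$ at $z_p$. Then $a_pL_\alpha$ and $h_{c_p}$ have the same value ($0$) and the same derivative at $z_p$, and on $[z_p,1]$ $$h_{c_p}\le \ell_p\le a_pL_\alpha ,$$ i.e. $\ell_p$ separates the graphs of $a_pL_\alpha$ and $h_{c_p}$ on $(z_p,1)$.
   Context: $L_\alpha$ is the solution on $(-1,1)$ of $(1-s^2)y''-2sy'+\alpha(\alpha+1)y=0$ bounded near $1$ with $L_\alpha(1)=1$ (i.e. ${}_2F_1(-\alpha,\alpha+1;1;\frac{1-s}{2})$); $z_p$ is its largest zero in $(-1,1)$; $h_c(s)=\big(\frac{1+s}{2}\big)^p-c^p\big(\frac{1-s}{2}\big)^p$. *)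

(* Defs.v *)
From Stdlib Require Import Reals Lra.
Open Scope R_scope.

(* Real power x^p for p > 0, with the convention 0^p = 0 (Stdlib's Rpower
   gives Rpower 0 p = 1, which is wrong at s = 1 for h_c). *)
Definition rpow (x p : R) : R := if Rlt_dec 0 x then Rpower x p else 0.

Definition hc (p c s : R) : R :=
  rpow ((1 + s) / 2) p - rpow c p * rpow ((1 - s) / 2) p.

Definition is_legendre (alpha : R) (L L1 L2 : R -> R) : Prop :=
  (forall s, -1 < s < 1 ->
     derivable_pt_lim L s (L1 s) /\ derivable_pt_lim L1 s (L2 s) /\
     (1 - s ^ 2) * L2 s - 2 * s * L1 s + alpha * (alpha + 1) * L s = 0) /\
  (forall eps, 0 < eps -> exists delta, 0 < delta /\
     forall s, 1 - delta < s < 1 -> Rabs (L s - 1) < eps) /\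
  L 1 = 1.

Definition is_largest_zero (L : R -> R) (z : R) : Prop :=
  -1 < z < 1 /\ L z = 0 /\ (forall s, z < s < 1 -> L s <> 0).

(* Main.v *)
Require Import Defs.
From Stdlib Require Import Reals Lra Psatz Ranalysis5.
Open Scope R_scope.


Lemma mono_le (f f' : R -> R) (a b : R) : a <= b ->
  (forall x, a <= x <= b -> derivable_pt_lim f x (f' x)) ->
  (forall x, a < x < b -> 0 <= f' x) -> f a <= f b.
Proof.
  intros Hab Hd Hp. destruct (Req_dec a b) as [->|Hne]; [lra|].
  destruct (MVT_cor2 f f' a b ltac:(lra) Hd) as [c [Hc Hc2]].
  assert (0 <= f' c * (b - a)) by (apply Rmult_le_pos; [apply Hp; lra| lra]). lra.
Qed.

Lemma mono_lt (f f' : R -> R) (a b : R) : a < b ->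
  (forall x, a <= x <= b -> derivable_pt_lim f x (f' x)) ->
  (forall x, a < x < b -> 0 < f' x) -> f a < f b.
Proof.
  intros Hab Hd Hp.
  destruct (MVT_cor2 f f' a b ltac:(lra) Hd) as [c [Hc Hc2]].
  assert (0 < f' c * (b - a)) by (apply Rmult_lt_0_compat; [apply Hp; lra| lra]). lra.
Qed.

Lemma D_ln1m (s : R) : s < 1 -> derivable_pt_lim (fun s => ln (1 - s)) s (- / (1 - s)).
Proof.
  intros Hs.
  assert (H := derivable_pt_lim_comp (fun s => 1 - s) ln s (0 - 1) (/ (1 - s))).
  replace (- / (1 - s)) with (/ (1 - s) * (0 - 1)) by ring.
  apply H.
  - apply derivable_pt_lim_minus; [apply derivable_pt_lim_const|apply derivable_pt_lim_id].
  - apply derivable_pt_lim_ln. lra.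
Qed.

Lemma blowup (f f1 : R -> R) (s1 dl M d : R) : s1 < 1 -> 0 < dl -> 0 < d ->
  (forall s, s1 <= s < 1 -> derivable_pt_lim f s (f1 s)) ->
  (forall s, s1 <= s < 1 -> dl / (1 - s) <= f1 s) ->
  (forall s, 1 - d < s < 1 -> f s <= M) -> False.
Proof.
  intros Hs1 Hdl Hd Hder Hf1 HM.
  set (g := fun s => f s + dl * ln (1 - s)).
  assert (Hg : forall s, s1 <= s < 1 -> g s1 <= g s).
  { intros s Hs. apply (mono_le g (fun s => f1 s - dl / (1 - s))). lra.
    - intros x Hx. unfold g. replace (f1 x - dl / (1 - x)) with (f1 x + dl * (- / (1 - x))) by (unfold Rdiv; ring).
      apply derivable_pt_lim_plus. apply Hder; lra.
      apply derivable_pt_lim_scal. apply D_ln1m. lra.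
    - intros x Hx. specialize (Hf1 x ltac:(lra)). lra. }
  set (m := Rmin (d / 2) (1 - s1)).
  assert (Hm : 0 < m) by (unfold m; apply Rmin_pos; lra).
  set (K := Rmin ((g s1 - M - 1) / dl) (ln m)).
  set (s := 1 - exp K).
  assert (HK : exp K <= m).
  { rewrite <- (exp_ln m Hm). destruct (Rle_lt_or_eq_dec _ _ (Rmin_r ((g s1 - M - 1) / dl) (ln m))) as [H|H].
    left; apply exp_increasing; exact H. unfold K; rewrite H; lra. }
  assert (Hpos := exp_pos K).
  assert (Hm1 : m <= d / 2) by apply Rmin_l. assert (Hm2 : m <= 1 - s1) by apply Rmin_r.
  assert (Hs : s1 <= s < 1) by (unfold s; lra).
  specialize (Hg s Hs). unfold g in Hg. unfold s in Hg at 2. replace (1 - (1 - exp K)) with (exp K) in Hg by ring.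
  rewrite ln_exp in Hg.
  assert (HKl : K <= (g s1 - M - 1) / dl) by apply Rmin_l.
  assert (dl * K <= g s1 - M - 1).
  { apply (Rmult_le_compat_l dl) in HKl; [|lra]. field_simplify in HKl; lra. }
  specialize (HM s ltac:(unfold s; lra)). unfold g in *. lra.
Qed.


Lemma leg_near1 al L L1 L2 : is_legendre al L L1 L2 ->
  exists d, 0 < d /\ d < 1 /\ forall s, 1 - d < s < 1 -> 0 < L s < 2.
Proof.
  intros [_ [Hlim _]]. destruct (Hlim 1 ltac:(lra)) as [d [Hd H]].
  exists (Rmin d (1/2)). split; [apply Rmin_pos; lra|]. split.
  assert (Rmin d (1/2) <= 1/2) by apply Rmin_r. lra.
  intros s Hs. assert (Rmin d (1/2) <= d) by apply Rmin_l.
  specialize (H s ltac:(lra)). apply Rabs_def2 in H. lra.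
Qed.

Lemma L_cont al L L1 L2 s : is_legendre al L L1 L2 -> -1 < s < 1 -> continuity_pt L s.
Proof.
  intros [HD _] Hs. destruct (HD s Hs) as [H _].
  apply (derivable_continuous_pt L s (exist _ (L1 s) H)).
Qed.

Lemma L_pos al L L1 L2 z : is_legendre al L L1 L2 -> is_largest_zero L z ->
  forall s, z < s < 1 -> 0 < L s.
Proof.
  intros Hleg [Hz [HLz Hnz]] s Hs.
  destruct (Rtotal_order (L s) 0) as [Hneg|[Heq|Hp]]; [|exfalso; exact (Hnz s Hs Heq)|exact Hp].
  exfalso. destruct (leg_near1 _ _ _ _ Hleg) as [d [Hd [Hd1 Hn]]].
  set (s1 := Rmax ((s+1)/2) (1 - d/2)).
  assert (H1 : (s+1)/2 <= s1) by apply Rmax_l. assert (H2 : 1 - d/2 <= s1) by apply Rmax_r.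
  assert (H3 : s1 < 1) by (unfold s1; apply Rmax_lub_lt; lra).
  destruct (Hn s1 ltac:(lra)) as [Hp1 _].
  destruct (IVT_interv L s s1) as [x [Hx Hx0]]; try lra.
  - intros x Hx. apply (L_cont al L L1 L2); try lra. auto.
  - exact (Hnz x ltac:(lra) Hx0).
Qed.

Lemma D_w al L L1 L2 s : is_legendre al L L1 L2 -> -1 < s < 1 ->
  derivable_pt_lim (fun s => (1 - s * s) * L1 s) s (- (al * (al + 1)) * L s).
Proof.
  intros [HD _] Hs. destruct (HD s Hs) as [H0 [H1 H2]].
  replace (- (al * (al + 1)) * L s) with ((0 - (1 * s + s * 1)) * L1 s + (1 - s * s) * L2 s) by (simpl in H2; nra).
  apply (derivable_pt_lim_mult (fun s => 1 - s * s) L1); [|exact H1].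
  apply (derivable_pt_lim_minus (fun _ => 1) (fun s => s * s)); [apply derivable_pt_lim_const|].
  apply (derivable_pt_lim_mult id id); apply derivable_pt_lim_id.
Qed.


Lemma div_le_helper k dl s y : 0 < k -> s < 1 -> dl <= k * (1 - s) * y -> dl / k / (1 - s) <= y.
Proof.
  intros Hk Hs H. unfold Rdiv. rewrite Rmult_assoc, <- Rinv_mult.
  apply (Rmult_le_reg_r (k * (1 - s))). nra.
  rewrite Rmult_assoc, Rinv_l by nra. nra.
Qed.

Lemma ineq_w dl s x : 0 < dl -> -1 < s < 1 -> (1 - s * s) * x <= - dl -> dl / 2 / (1 - s) <= - x.
Proof.
  intros Hd Hs H. apply (div_le_helper 2 dl s (- x)); [lra|lra|].
  assert (Hq : 0 < 1 - s * s) by nra.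
  assert (Hx : x < 0).
  { destruct (Rlt_or_le x 0) as [?|Hx]; auto. assert (0 <= (1 - s * s) * x) by (apply Rmult_le_pos; lra). lra. }
  assert (Hm : (1 + s) * (- x) <= 2 * (- x)) by (apply Rmult_le_compat_r; lra).
  replace ((1 - s * s) * x) with (- ((1 - s) * ((1 + s) * (- x)))) in H by ring.
  assert ((1 - s) * ((1 + s) * (- x)) <= (1 - s) * (2 * (- x))) by (apply Rmult_le_compat_l; lra).
  lra.
Qed.

Lemma w_pos al L L1 L2 z : 0 < al -> is_legendre al L L1 L2 -> is_largest_zero L z ->
  forall s, z < s < 1 -> 0 < (1 - s * s) * L1 s.
Proof.
  intros Hal Hleg Hlz s Hs. pose proof Hlz as [Hz _].
  set (w := fun s => (1 - s * s) * L1 s).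
  assert (Hp : 0 < al * (al + 1)) by nra.
  assert (Dw : forall x, -1 < x < 1 -> derivable_pt_lim (fun x => - w x) x (al * (al + 1) * L x)).
  { intros x Hx. replace (al * (al + 1) * L x) with (- (- (al * (al + 1)) * L x)) by ring.
    apply (derivable_pt_lim_opp w). apply (D_w al L L1 L2); auto. }
  destruct (Rlt_or_le 0 (w s)) as [H|H]; [exact H|exfalso].
  set (s1 := (s + 1) / 2).
  assert (Hs1 : w s1 < w s).
  { assert (- w s < - w s1); [|lra].
    apply (mono_lt (fun x => - w x) (fun x => al * (al + 1) * L x)). unfold s1; lra.
    intros x Hx; apply Dw; unfold s1 in *; lra.
    intros x Hx. apply Rmult_lt_0_compat; [lra|]. apply (L_pos al L L1 L2 z); auto; unfold s1 in *; lra. }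
  destruct (leg_near1 _ _ _ _ Hleg) as [d [Hd [Hd1 Hn]]].
  apply (blowup (fun x => - L x) (fun x => - L1 x) s1 (- w s1 / 2) 0 d); try lra; try (unfold s1; lra).
  - intros x Hx. apply derivable_pt_lim_opp. destruct Hleg as [HD _]. apply HD. unfold s1 in *; lra.
  - intros x Hx. apply ineq_w. lra. unfold s1 in *; lra.
    assert (- w s1 <= - w x); [|unfold w in *; lra].
    apply (mono_le (fun x => - w x) (fun x => al * (al + 1) * L x)). lra.
    intros y Hy; apply Dw; unfold s1 in *; lra.
    intros y Hy. apply Rmult_le_pos; [lra|]. left. apply (L_pos al L L1 L2 z); auto; unfold s1 in *; lra.
  - intros x Hx. specialize (Hn x Hx). lra.
Qed.

Lemma L1z_pos al L L1 L2 z : 0 < al -> is_legendre al L L1 L2 -> is_largest_zero L z -> 0 < L1 z.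
Proof.
  intros Hal Hleg Hlz. pose proof Hlz as [Hz _].
  set (w := fun s => (1 - s * s) * L1 s).
  assert (Hp : 0 < al * (al + 1)) by nra.
  set (s := (z + 1) / 2).
  assert (Hws : 0 < w s) by (apply (w_pos al L L1 L2 z); auto; unfold s; lra).
  assert (w s < w z).
  { assert (- w z < - w s); [|lra].
    apply (mono_lt (fun x => - w x) (fun x => al * (al + 1) * L x)). unfold s; lra.
    intros x Hx. replace (al * (al + 1) * L x) with (- (- (al * (al + 1)) * L x)) by ring.
    apply (derivable_pt_lim_opp w). apply (D_w al L L1 L2); auto. unfold s in *; lra.
    intros x Hx. apply Rmult_lt_0_compat; [lra|]. apply (L_pos al L L1 L2 z); auto; unfold s in *; lra. }
  unfold w in *. assert (0 < 1 - z * z) by nra. nra.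
Qed.


Lemma ineq_v dl s y : 0 < dl -> -1 < s < 1 -> (1 - s * s) * ((1 - s * s) * y) <= - dl -> dl / 8 / (1 - s) <= - y.
Proof.
  intros Hd Hs H. apply (div_le_helper 8 dl s (- y)); [lra|lra|].
  assert (Hq : 0 < 1 - s * s) by nra.
  assert (Hy : y < 0).
  { destruct (Rlt_or_le y 0) as [?|Hy]; auto. assert (0 <= (1 - s * s) * ((1 - s * s) * y)) by (repeat apply Rmult_le_pos; lra). lra. }
  assert (Hb : (1 - s * s) * (1 - s * s) <= 8 * (1 - s)).
  { replace ((1 - s * s) * (1 - s * s)) with ((1 - s) * ((1 - s) * ((1 + s) * (1 + s)))) by ring.
    rewrite (Rmult_comm 8). apply Rmult_le_compat_l; [lra|]. assert ((1 + s) * (1 + s) <= 4) by nra.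
    assert ((1 - s) * ((1 + s) * (1 + s)) <= 2 * 4) by (apply Rmult_le_compat; nra). lra. }
  assert (((1 - s * s) * (1 - s * s)) * (- y) <= (8 * (1 - s)) * (- y)) by (apply Rmult_le_compat_r; lra).
  replace ((1 - s * s) * ((1 - s * s) * y)) with (- (((1 - s * s) * (1 - s * s)) * (- y))) in H by ring.
  lra.
Qed.

Lemma D_v al L L1 L2 s : is_legendre al L L1 L2 -> -1 < s < 1 ->
  derivable_pt_lim (fun s => (1 - s * s) * (2 * s * L1 s - al * (al + 1) * L s)) s
     ((1 - s * s) * (2 - al * (al + 1)) * L1 s).
Proof.
  intros [HD _] Hs. destruct (HD s Hs) as [H0 [H1 H2]].
  replace ((1 - s * s) * (2 - al * (al + 1)) * L1 s) with
    ((0 - (1 * s + s * 1)) * (2 * s * L1 s - al * (al + 1) * L s)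
     + (1 - s * s) * (((0 * s + 2 * 1) * L1 s + 2 * s * L2 s) - (0 * L s + al * (al + 1) * L1 s)))
    by (simpl in H2; nra).
  apply (derivable_pt_lim_mult (fun s => 1 - s * s) (fun s => 2 * s * L1 s - al * (al + 1) * L s)).
  - apply (derivable_pt_lim_minus (fun _ => 1) (fun s => s * s)); [apply derivable_pt_lim_const|].
    apply (derivable_pt_lim_mult id id); apply derivable_pt_lim_id.
  - apply (derivable_pt_lim_minus (fun s => 2 * s * L1 s) (fun s => al * (al + 1) * L s)).
    + apply (derivable_pt_lim_mult (fun s => 2 * s) L1); auto.
      apply (derivable_pt_lim_mult (fun _ => 2) id). apply derivable_pt_lim_const. apply derivable_pt_lim_id.
    + apply (derivable_pt_lim_mult (fun _ => al * (al + 1)) L); auto. apply derivable_pt_lim_const.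
Qed.

Lemma L1_pos al L L1 L2 z : 0 < al -> is_legendre al L L1 L2 -> is_largest_zero L z ->
  forall s, z < s < 1 -> 0 < L1 s.
Proof.
  intros Hal Hleg Hlz s Hs. pose proof Hlz as [Hz _].
  assert (H := w_pos al L L1 L2 z Hal Hleg Hlz s Hs).
  assert (0 < 1 - s * s) by nra. nra.
Qed.

Lemma Rmult_le_0_l_helper a b : 0 <= a -> b <= 0 -> a * b <= 0.
Proof. intros. nra. Qed.

Lemma L2_pos al L L1 L2 z : 0 < al -> 2 < al * (al + 1) -> is_legendre al L L1 L2 -> is_largest_zero L z ->
  forall s, z < s < 1 -> 0 < L2 s.
Proof.
  intros Hal Hp2 Hleg Hlz s Hs. pose proof Hlz as [Hz _].
  set (p := al * (al + 1)) in *.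
  set (v := fun s => (1 - s * s) * (2 * s * L1 s - p * L s)).
  assert (Hrel : forall x, -1 < x < 1 -> v x = (1 - x * x) * ((1 - x * x) * L2 x)).
  { intros x Hx. destruct Hleg as [HD _]. destruct (HD x Hx) as [_ [_ H2]]. unfold v, p in *. simpl in H2.
    apply Rmult_eq_compat_l. nra. }
  assert (Dv : forall x, -1 < x < 1 -> derivable_pt_lim (fun x => - v x) x ((1 - x * x) * (p - 2) * L1 x)).
  { intros x Hx. replace ((1 - x * x) * (p - 2) * L1 x) with (- ((1 - x * x) * (2 - p) * L1 x)) by ring.
    apply (derivable_pt_lim_opp v). apply (D_v al L L1 L2); auto. }
  assert (Dpos : forall x, z < x < 1 -> 0 < (1 - x * x) * (p - 2) * L1 x).
  { intros x Hx. apply Rmult_lt_0_compat. apply Rmult_lt_0_compat. nra. lra.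
    apply (L1_pos al L L1 L2 z); auto. }
  assert (Hvs : 0 < v s).
  { destruct (Rlt_or_le 0 (v s)) as [H|H]; [exact H|exfalso].
    set (s1 := (s + 1) / 2).
    assert (Hs1 : v s1 < v s).
    { assert (- v s < - v s1); [|lra].
      apply (mono_lt (fun x => - v x) (fun x => (1 - x * x) * (p - 2) * L1 x)). unfold s1; lra.
      intros x Hx; apply Dv; unfold s1 in *; lra.
      intros x Hx. apply Dpos. unfold s1 in *; lra. }
    apply (blowup (fun x => - L1 x) (fun x => - L2 x) s1 (- v s1 / 8) 0 (1 - z)); try lra; try (unfold s1; lra).
    - intros x Hx. apply derivable_pt_lim_opp. destruct Hleg as [HD _]. apply HD. unfold s1 in *; lra.
    - intros x Hx. apply ineq_v. lra. unfold s1 in *; lra.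
      rewrite <- Hrel by (unfold s1 in *; lra).
      assert (- v s1 <= - v x); [|lra].
      apply (mono_le (fun x => - v x) (fun x => (1 - x * x) * (p - 2) * L1 x)). lra.
      intros y Hy; apply Dv; unfold s1 in *; lra.
      intros y Hy. left. apply Dpos. unfold s1 in *; lra.
    - intros x Hx. assert (0 < L1 x) by (apply (L1_pos al L L1 L2 z); auto; lra). lra. }
  rewrite Hrel in Hvs by lra.
  assert (0 < 1 - s * s) by nra.
  destruct (Rlt_or_le 0 (L2 s)) as [?|Hn]; auto.
  assert ((1 - s * s) * L2 s <= 0) by (apply Rmult_le_0_l_helper; lra).
  assert ((1 - s * s) * ((1 - s * s) * L2 s) <= 0) by (apply Rmult_le_0_l_helper; lra). lra.
Qed.

Lemma L_above al L L1 L2 z : 0 < al -> 2 < al * (al + 1) -> is_legendre al L L1 L2 -> is_largest_zero L z ->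
  forall s, z <= s < 1 -> L1 z * (s - z) <= L s.
Proof.
  intros Hal Hp2 Hleg Hlz s Hs. pose proof Hlz as [Hz [HLz _]].
  destruct (Req_dec s z) as [->|Hne]. rewrite HLz; lra.
  destruct Hleg as [HD Hrest] eqn:E.
  destruct (MVT_cor2 L L1 z s ltac:(lra)) as [xi [Hxi Hxi2]].
  { intros x Hx. apply HD. lra. }
  assert (L1 z <= L1 xi).
  { apply (mono_le L1 L2). lra. intros x Hx; apply HD; lra.
    intros x Hx. left. apply (L2_pos al L L1 L2 z); auto. lra. }
  rewrite HLz in Hxi. assert (L1 z * (s - z) <= L1 xi * (s - z)) by (apply Rmult_le_compat_r; lra). lra.
Qed.


Lemma ln_le_ x y : 0 < x -> x <= y -> ln x <= ln y.
Proof. intros Hx [H|H]. left; apply ln_increasing; lra. subst; lra. Qed.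

Lemma exp_le_ x y : x <= y -> exp x <= exp y.
Proof. intros [H|H]. left; apply exp_increasing; lra. subst; lra. Qed.

Lemma ln_le_sub1 y : 0 < y -> ln y <= y - 1.
Proof. intros Hy. rewrite <- (ln_exp (y - 1)). apply ln_le_; auto. replace y with (1 + (y - 1)) at 1 by ring. apply exp_ineq1_le. Qed.

Lemma Rpower_1_base c : Rpower 1 c = 1.
Proof. unfold Rpower. rewrite ln_1, Rmult_0_r. apply exp_0. Qed.

Lemma Rpower_pos x c : 0 < Rpower x c.
Proof. unfold Rpower. apply exp_pos. Qed.

Lemma Rpower_succ u q : 0 < u -> Rpower u (q + 1) = Rpower u q * u.
Proof. intros Hu. rewrite Rpower_plus, Rpower_1; auto. Qed.

Lemma D_lin (s : R) : derivable_pt_lim (fun s => (1 + s) / 2) s (/ 2).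
Proof.
  replace (/2) with ((0 + 1) * / 2 + (1 + s) * 0) by ring.
  apply (derivable_pt_lim_mult (fun s => 1 + s) (fun _ => / 2)).
  apply (derivable_pt_lim_plus (fun _ => 1) id). apply derivable_pt_lim_const. apply derivable_pt_lim_id.
  apply derivable_pt_lim_const.
Qed.

Lemma D_lin2 (s : R) : derivable_pt_lim (fun s => (1 - s) / 2) s (- / 2).
Proof.
  replace (- /2) with ((0 - 1) * / 2 + (1 - s) * 0) by ring.
  apply (derivable_pt_lim_mult (fun s => 1 - s) (fun _ => / 2)).
  apply (derivable_pt_lim_minus (fun _ => 1) id). apply derivable_pt_lim_const. apply derivable_pt_lim_id.
  apply derivable_pt_lim_const.
Qed.

Lemma D_up q s : -1 < s -> derivable_pt_lim (fun s => Rpower ((1 + s) / 2) q) s (q * Rpower ((1 + s) / 2) (q - 1) * / 2).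
Proof.
  intros Hs.
  apply (derivable_pt_lim_comp (fun s => (1 + s) / 2) (fun x => Rpower x q)).
  apply D_lin. apply derivable_pt_lim_power. lra.
Qed.

Lemma D_vp q s : s < 1 -> derivable_pt_lim (fun s => Rpower ((1 - s) / 2) q) s (- (q * Rpower ((1 - s) / 2) (q - 1) * / 2)).
Proof.
  intros Hs. replace (- (q * Rpower ((1 - s) / 2) (q - 1) * / 2)) with (q * Rpower ((1 - s) / 2) (q - 1) * (- / 2)) by ring.
  apply (derivable_pt_lim_comp (fun s => (1 - s) / 2) (fun x => Rpower x q)).
  apply D_lin2. apply derivable_pt_lim_power. lra.
Qed.

Definition ustar (p : R) := Rpower p (- / (p - 1)).

Lemma ustar_pow p : 1 < p -> Rpower (ustar p) (p - 1) = / p.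
Proof.
  intros Hp. unfold ustar. rewrite Rpower_mult.
  replace (- / (p - 1) * (p - 1)) with (Ropp 1) by (field; lra).
  rewrite Rpower_Ropp. rewrite Rpower_1 by lra. reflexivity.
Qed.

Lemma ustar_range p : 1 < p -> 0 < ustar p < 1.
Proof.
  intros Hp. split. apply Rpower_pos.
  unfold ustar. rewrite <- (Rpower_O p) at 2 by lra. apply Rpower_lt. lra.
  assert (0 < / (p - 1)) by (apply Rinv_0_lt_compat; lra). lra.
Qed.

Lemma ustar_le p : 2 < p -> ustar p <= (p - 1) / p.
Proof.
  intros Hp. destruct (Rle_or_lt (ustar p) ((p - 1) / p)) as [H|H]; auto. exfalso.
  assert (Hu := ustar_range p ltac:(lra)).
  assert (Hq : 0 < (p - 1) / p) by (apply Rdiv_lt_0_compat; lra).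
  assert (H1 : Rpower ((p - 1) / p) (p - 1) < Rpower (ustar p) (p - 1)) by (apply Rlt_Rpower_l; lra).
  rewrite ustar_pow in H1 by lra.
  assert (Hk : - ln p <= (p - 1) * ln ((p - 1) / p)).
  { set (q := p - 1). assert (Hq1 : 1 < q) by (unfold q; lra).
    replace p with (q + 1) by (unfold q; ring).
    replace (q + 1 - 1) with q by ring.
    assert (E1 : ln (q / (q + 1)) = - ln ((q + 1) / q)).
    { rewrite <- ln_Rinv by (apply Rdiv_lt_0_compat; lra). f_equal. field. lra. }
    rewrite E1.
    assert (E2 : ln (q + 1) = ln q + ln ((q + 1) / q)).
    { rewrite <- ln_mult by (try apply Rdiv_lt_0_compat; lra). f_equal. field. lra. }
    rewrite E2.
    assert (B1 : ln ((q + 1) / q) <= 1 / q).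
    { assert (X := ln_le_sub1 ((q + 1) / q) ltac:(apply Rdiv_lt_0_compat; lra)).
      replace ((q + 1) / q - 1) with (1 / q) in X by (field; lra). exact X. }
    assert (B2 : 1 - 1 / q <= ln q).
    { assert (X := ln_le_sub1 (1 / q) ltac:(apply Rdiv_lt_0_compat; lra)).
      unfold Rdiv in X. rewrite Rmult_1_l in X. rewrite ln_Rinv in X by lra.
      unfold Rdiv. lra. }
    assert (B3 : (q - 1) * ln ((q + 1) / q) <= (q - 1) * (1 / q)) by (apply Rmult_le_compat_l; lra).
    replace ((q - 1) * (1 / q)) with (1 - 1 / q) in B3 by (field; lra).
    nra. }
  assert (Hk2 : / p <= Rpower ((p - 1) / p) (p - 1)).
  { unfold Rpower. rewrite <- (exp_ln (/ p)) by (apply Rinv_0_lt_compat; lra).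
    apply exp_le_. rewrite ln_Rinv by lra. lra. }
  lra.
Qed.

Definition Gf (p u : R) := (p - 1) * (p - 1) * Rpower u (p - 2) - p * (p - 2) * Rpower u (p - 1) - 1.

Lemma D_Gf p u : 0 < u -> derivable_pt_lim (Gf p) u ((p - 2) * (p - 1) * Rpower u (p - 3) * ((p - 1) - p * u)).
Proof.
  intros Hu.
  assert (E : Rpower u (p - 2) = Rpower u (p - 3) * u) by (rewrite <- Rpower_succ by lra; f_equal; ring).
  replace ((p - 2) * (p - 1) * Rpower u (p - 3) * ((p - 1) - p * u)) with
    ((p - 1) * (p - 1) * ((p - 2) * Rpower u (p - 2 - 1)) - p * (p - 2) * ((p - 1) * Rpower u (p - 1 - 1)) - 0).
  2:{ replace (p - 2 - 1) with (p - 3) by ring. replace (p - 1 - 1) with (p - 2) by ring. rewrite E. ring. }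
  unfold Gf.
  apply (derivable_pt_lim_minus (fun u => (p - 1) * (p - 1) * Rpower u (p - 2) - p * (p - 2) * Rpower u (p - 1)) (fun _ => 1)); [|apply derivable_pt_lim_const].
  apply (derivable_pt_lim_minus (fun u => (p - 1) * (p - 1) * Rpower u (p - 2)) (fun u => p * (p - 2) * Rpower u (p - 1))).
  apply (derivable_pt_lim_scal (fun u => Rpower u (p - 2))). apply derivable_pt_lim_power; auto.
  apply (derivable_pt_lim_scal (fun u => Rpower u (p - 1))). apply derivable_pt_lim_power; auto.
Qed.

Lemma Gf_1 p : Gf p 1 = 0.
Proof. unfold Gf. rewrite !Rpower_1_base. ring. Qed.

Lemma Gf_ustar p : 2 < p -> 0 <= Gf p (ustar p).
Proof.
  intros Hp. assert (Hu := ustar_range p ltac:(lra)). assert (Hl := ustar_le p Hp).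
  assert (E : Rpower (ustar p) (p - 1) = Rpower (ustar p) (p - 2) * ustar p) by (rewrite <- Rpower_succ by lra; f_equal; ring).
  assert (E2 := ustar_pow p ltac:(lra)).
  unfold Gf. set (B := Rpower (ustar p) (p - 2)) in *. set (u := ustar p) in *.
  assert (HB : B = / p / u) by (rewrite E in E2; apply (Rmult_eq_reg_r u); [rewrite E2; field; lra| lra]).
  rewrite E, HB.
  replace ((p - 1) * (p - 1) * (/ p / u) - p * (p - 2) * (/ p / u * u) - 1) with
     ((p - 1) * ((p - 1) - p * u) / (p * u)) by (field; lra).
  apply Rle_mult_inv_pos. apply Rmult_le_pos. lra.
  assert (p * u <= p * ((p - 1) / p)) by (apply Rmult_le_compat_l; lra).
  replace (p * ((p - 1) / p)) with (p - 1) in H by (field; lra). lra. nra.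
Qed.

Lemma Gf_nonneg p u : 2 < p -> ustar p <= u <= 1 -> 0 <= Gf p u.
Proof.
  intros Hp Hu. assert (Hr := ustar_range p ltac:(lra)). assert (Hl := ustar_le p Hp).
  assert (Hpos : forall x, 0 < x -> 0 < (p - 2) * (p - 1) * Rpower x (p - 3)).
  { intros x Hx. assert (H := Rpower_pos x (p - 3)). apply Rmult_lt_0_compat; [nra|auto]. }
  destruct (Rle_or_lt u ((p - 1) / p)) as [H|H].
  - assert (Gf p (ustar p) <= Gf p u); [|pose proof (Gf_ustar p Hp); lra].
    apply (mono_le (Gf p) (fun u => (p - 2) * (p - 1) * Rpower u (p - 3) * ((p - 1) - p * u))). lra.
    intros x Hx; apply D_Gf; lra.
    intros x Hx. apply Rmult_le_pos. left; apply Hpos; lra.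
    assert (p * x <= p * ((p - 1) / p)) by (apply Rmult_le_compat_l; lra).
    replace (p * ((p - 1) / p)) with (p - 1) in H0 by (field; lra). lra.
  - assert (- Gf p u <= - Gf p 1); [|rewrite Gf_1 in H0; lra].
    apply (mono_le (fun u => - Gf p u) (fun u => - ((p - 2) * (p - 1) * Rpower u (p - 3) * ((p - 1) - p * u)))). lra.
    intros x Hx. apply derivable_pt_lim_opp. apply D_Gf. assert (0 < (p - 1) / p) by (apply Rdiv_lt_0_compat; lra). lra.
    intros x Hx. assert (0 < (p - 1) / p) by (apply Rdiv_lt_0_compat; lra).
    assert (p * ((p - 1) / p) < p * x) by (apply Rmult_lt_compat_l; lra).
    replace (p * ((p - 1) / p)) with (p - 1) in H1 by (field; lra).
    assert (X := Hpos x ltac:(lra)).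
    assert (0 <= (p - 2) * (p - 1) * Rpower x (p - 3) * (p * x - (p - 1))) by (apply Rmult_le_pos; lra).
    lra.
Qed.


Lemma D_W al L L1 L2 s : 0 < al -> is_legendre al L L1 L2 -> -1 < s < 1 ->
  let p := al * (al + 1) in
  derivable_pt_lim (fun s => 2 * (p - 1) * Rpower ((1 + s) / 2) (p - 1) * ((1 - s) / 2) * L s
      - (Rpower ((1 + s) / 2) (p - 1) - / p) * ((1 - s * s) * L1 s)) s
    (L s * Gf p ((1 + s) / 2)).
Proof.
  intros Hal Hleg Hs p.
  assert (Dw := D_w al L L1 L2 s Hleg Hs). fold p in Dw.
  destruct Hleg as [HD _]. destruct (HD s Hs) as [H0 [H1 H2]].
  assert (DU := D_up (p - 1) s ltac:(lra)).
  set (U := fun s => Rpower ((1 + s) / 2) (p - 1)) in *.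
  set (u := (1 + s) / 2).
  assert (Hu : 0 < u) by (unfold u; lra).
  set (B := Rpower u (p - 2)).
  assert (EU : U s = B * u) by (unfold U, B; fold u; rewrite <- Rpower_succ by lra; f_equal; ring).
  assert (EU' : Rpower ((1 + s) / 2) (p - 1 - 1) = B) by (unfold B, u; f_equal; ring).
  rewrite EU' in DU.
  replace (L s * Gf p u) with
    (((0 * U s + 2 * (p - 1) * ((p - 1) * B * / 2)) * ((1 - s) / 2) + (2 * (p - 1) * U s) * (- / 2)) * L s
     + (2 * (p - 1) * U s * ((1 - s) / 2)) * L1 s
     - (((p - 1) * B * / 2 - 0) * ((1 - s * s) * L1 s) + (U s - / p) * (- p * L s))).
  2:{ unfold Gf. fold B. replace (Rpower u (p - 1)) with (B * u) by (rewrite <- EU; reflexivity).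
      rewrite EU. unfold u. field. unfold p; intro Hp0; nra. }
  apply (derivable_pt_lim_minus (fun s => 2 * (p - 1) * U s * ((1 - s) / 2) * L s)
           (fun s => (U s - / p) * ((1 - s * s) * L1 s))).
  - apply (derivable_pt_lim_mult (fun s => 2 * (p - 1) * U s * ((1 - s) / 2)) L); auto.
    apply (derivable_pt_lim_mult (fun s => 2 * (p - 1) * U s) (fun s => (1 - s) / 2)).
    + apply (derivable_pt_lim_mult (fun _ => 2 * (p - 1)) U); auto. apply derivable_pt_lim_const.
    + apply D_lin2.
  - apply (derivable_pt_lim_mult (fun s => U s - / p) (fun s => (1 - s * s) * L1 s)); auto.
    apply (derivable_pt_lim_minus U (fun _ => / p)); auto. apply derivable_pt_lim_const.
Qed.

Lemma key_ineq al L L1 L2 z : 0 < al -> 2 < al * (al + 1) -> is_legendre al L L1 L2 -> is_largest_zero L z ->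
  1 <= al * (al + 1) * Rpower ((1 + z) / 2) (al * (al + 1) - 1).
Proof.
  intros Hal Hp2 Hleg Hlz. pose proof Hlz as [Hz _].
  set (p := al * (al + 1)) in *.
  assert (Hus := ustar_range p ltac:(lra)). assert (Husp := ustar_pow p ltac:(lra)).
  set (us := ustar p) in *.
  destruct (Rle_or_lt us ((1 + z) / 2)) as [Hle|Hlt].
  - assert (Rpower us (p - 1) <= Rpower ((1 + z) / 2) (p - 1)) by (apply Rle_Rpower_l; lra).
    rewrite Husp in H. apply (Rmult_le_compat_l p) in H; [|lra]. rewrite Rinv_r in H; lra.
  - exfalso.
    set (ss := 2 * us - 1).
    assert (Hss : z < ss < 1) by (unfold ss; lra).
    set (W := fun s => 2 * (p - 1) * Rpower ((1 + s) / 2) (p - 1) * ((1 - s) / 2) * L s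
      - (Rpower ((1 + s) / 2) (p - 1) - / p) * ((1 - s * s) * L1 s)).
    assert (HW0 : 0 < W ss).
    { unfold W. replace ((1 + ss) / 2) with us by (unfold ss; field). rewrite Husp.
      replace (/ p - / p) with 0 by ring. rewrite Rmult_0_l, Rminus_0_r.
      assert (0 < L ss) by (apply (L_pos al L L1 L2 z); auto; lra).
      assert (0 < / p) by (apply Rinv_0_lt_compat; lra).
      apply Rmult_lt_0_compat; auto. apply Rmult_lt_0_compat; [|lra].
      apply Rmult_lt_0_compat; lra. }
    assert (HWm : forall s, ss <= s < 1 -> W ss <= W s).
    { intros s Hs. apply (mono_le W (fun s => L s * Gf p ((1 + s) / 2))). lra.
      intros x Hx. apply (D_W al L L1 L2 x Hal Hleg). lra.
      intros x Hx. apply Rmult_le_pos. left; apply (L_pos al L L1 L2 z); auto; lra.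
      apply Gf_nonneg; auto. unfold ss in Hx. fold us. lra. }
    destruct (leg_near1 _ _ _ _ Hleg) as [d [Hd [Hd1 Hn]]].
    set (m := Rmin (d / 2) (W ss / (8 * (p - 1)))).
    assert (Hm1 : m <= d / 2) by apply Rmin_l. assert (Hm2 : m <= W ss / (8 * (p - 1))) by apply Rmin_r.
    assert (Hm0 : 0 < m) by (apply Rmin_pos; [lra| apply Rdiv_lt_0_compat; lra]).
    set (s := Rmax ((ss + 1) / 2) (1 - m)).
    assert (Hs1 : (ss + 1) / 2 <= s) by apply Rmax_l. assert (Hs2 : 1 - m <= s) by apply Rmax_r.
    assert (Hs3 : s < 1) by (unfold s; apply Rmax_lub_lt; lra).
    specialize (HWm s ltac:(lra)).
    assert (HL := Hn s ltac:(lra)).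
    assert (Hw := w_pos al L L1 L2 z Hal Hleg Hlz s ltac:(lra)).
    assert (Hu : us <= (1 + s) / 2 <= 1) by (unfold ss in *; lra).
    assert (HA1 : Rpower ((1 + s) / 2) (p - 1) <= 1).
    { apply Rle_trans with (Rpower 1 (p - 1)); [apply Rle_Rpower_l; lra| rewrite Rpower_1_base; lra]. }
    assert (HA2 : / p <= Rpower ((1 + s) / 2) (p - 1)).
    { rewrite <- Husp. apply Rle_Rpower_l; lra. }
    assert (HA0 := Rpower_pos ((1 + s) / 2) (p - 1)).
    assert (Hphi : 0 <= (Rpower ((1 + s) / 2) (p - 1) - / p) * ((1 - s * s) * L1 s)) by (apply Rmult_le_pos; lra).
    assert (Ht : 2 * (p - 1) * Rpower ((1 + s) / 2) (p - 1) * ((1 - s) / 2) * L s <= 2 * (p - 1) * m).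
    { set (A := Rpower ((1 + s) / 2) (p - 1)) in *.
      replace (2 * (p - 1) * A * ((1 - s) / 2) * L s) with ((p - 1) * (A * ((1 - s) * L s))) by field.
      replace (2 * (p - 1) * m) with ((p - 1) * (1 * (m * 2))) by ring.
      apply Rmult_le_compat_l; [lra|]. apply Rmult_le_compat; try lra.
      apply Rmult_le_pos; lra. apply Rmult_le_compat; lra. }
    assert (2 * (p - 1) * m <= W ss / 4).
    { apply (Rmult_le_compat_l (2 * (p - 1))) in Hm2; [|lra].
      replace (2 * (p - 1) * (W ss / (8 * (p - 1)))) with (W ss / 4) in Hm2 by (field; lra). lra. }
    unfold W in HWm at 2. lra.
Qed.


Definition hp (p c s : R) := (p / 2) * Rpower ((1 + s) / 2) (p - 1) + (Rpower c p * (p / 2)) * Rpower ((1 - s) / 2) (p - 1).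
Definition hpp (p c s : R) := (p / 2) * ((p - 1) * Rpower ((1 + s) / 2) (p - 2) * / 2)
   + (Rpower c p * (p / 2)) * (- ((p - 1) * Rpower ((1 - s) / 2) (p - 2) * / 2)).

Lemma hc_eq p c s : 0 < c -> -1 < s < 1 -> hc p c s = Rpower ((1 + s) / 2) p - Rpower c p * Rpower ((1 - s) / 2) p.
Proof.
  intros Hc Hs. unfold hc, rpow.
  destruct (Rlt_dec 0 ((1 + s) / 2)); [|lra]. destruct (Rlt_dec 0 c); [|lra].
  destruct (Rlt_dec 0 ((1 - s) / 2)); [|lra]. reflexivity.
Qed.

Lemma D_hc_raw p c s : -1 < s < 1 ->
  derivable_pt_lim (fun s => Rpower ((1 + s) / 2) p - Rpower c p * Rpower ((1 - s) / 2) p) s (hp p c s).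
Proof.
  intros Hs.
  replace (hp p c s) with (p * Rpower ((1 + s) / 2) (p - 1) * / 2 - Rpower c p * (- (p * Rpower ((1 - s) / 2) (p - 1) * / 2)))
    by (unfold hp; field).
  apply (derivable_pt_lim_minus (fun s => Rpower ((1 + s) / 2) p) (fun s => Rpower c p * Rpower ((1 - s) / 2) p)).
  apply D_up; lra.
  apply (derivable_pt_lim_scal (fun s => Rpower ((1 - s) / 2) p)). apply D_vp; lra.
Qed.

Lemma D_hc p c s : 0 < c -> -1 < s < 1 -> derivable_pt_lim (hc p c) s (hp p c s).
Proof.
  intros Hc Hs.
  apply (derivable_pt_lim_locally_ext (fun s => Rpower ((1 + s) / 2) p - Rpower c p * Rpower ((1 - s) / 2) p) _ s (-1) 1).
  lra. intros x Hx. symmetry. apply hc_eq; auto. apply D_hc_raw; auto.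
Qed.

Lemma D_hp p c s : -1 < s < 1 -> derivable_pt_lim (hp p c) s (hpp p c s).
Proof.
  intros Hs. unfold hp, hpp.
  apply (derivable_pt_lim_plus (fun s => p / 2 * Rpower ((1 + s) / 2) (p - 1)) (fun s => Rpower c p * (p / 2) * Rpower ((1 - s) / 2) (p - 1))).
  - apply (derivable_pt_lim_scal (fun s => Rpower ((1 + s) / 2) (p - 1))).
    replace (p - 2) with (p - 1 - 1) by ring. apply D_up; lra.
  - apply (derivable_pt_lim_scal (fun s => Rpower ((1 - s) / 2) (p - 1))).
    replace (p - 2) with (p - 1 - 1) by ring. apply D_vp; lra.
Qed.

Lemma hpp_sign p c s : hpp p c s = (p * (p - 1) / 4) * (Rpower ((1 + s) / 2) (p - 2) - Rpower c p * Rpower ((1 - s) / 2) (p - 2)).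
Proof. unfold hpp. field. Qed.

Lemma Rpower_inv x p : 0 < x -> Rpower (/ x) p = / Rpower x p.
Proof. intros Hx. unfold Rpower. rewrite ln_Rinv by lra. rewrite <- exp_Ropp. f_equal. ring. Qed.

Lemma c_split z p : -1 < z < 1 -> Rpower ((1 + z) / (1 - z)) p = Rpower ((1 + z) / 2) p / Rpower ((1 - z) / 2) p.
Proof.
  intros Hz. replace ((1 + z) / (1 - z)) with (((1 + z) / 2) * / ((1 - z) / 2)) by (field; lra).
  rewrite <- Rpower_mult_distr. rewrite Rpower_inv. reflexivity. lra. lra.
  apply Rinv_0_lt_compat; lra.
Qed.

Lemma hc_z p z : -1 < z < 1 -> hc p ((1 + z) / (1 - z)) z = 0.
Proof.
  intros Hz. rewrite hc_eq; auto. rewrite c_split by auto.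
  assert (H := Rpower_pos ((1 - z) / 2) p). field. lra.
  apply Rdiv_lt_0_compat; lra.
Qed.

Lemma hp_z p z : -1 < z < 1 -> hp p ((1 + z) / (1 - z)) z * (1 - z) = p * Rpower ((1 + z) / 2) (p - 1).
Proof.
  intros Hz. unfold hp. rewrite c_split by auto.
  assert (E1 : Rpower ((1 + z) / 2) p = Rpower ((1 + z) / 2) (p - 1) * ((1 + z) / 2)).
  { rewrite <- Rpower_succ by lra. f_equal; ring. }
  assert (E2 : Rpower ((1 - z) / 2) p = Rpower ((1 - z) / 2) (p - 1) * ((1 - z) / 2)).
  { rewrite <- Rpower_succ by lra. f_equal; ring. }
  rewrite E1, E2. assert (H := Rpower_pos ((1 - z) / 2) (p - 1)). field. lra.
Qed.

Lemma hp_pos p c s : 0 < p -> -1 < s < 1 -> 0 < hp p c s.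
Proof.
  intros Hp Hs. unfold hp.
  assert (H1 := Rpower_pos ((1 + s) / 2) (p - 1)). assert (H2 := Rpower_pos ((1 - s) / 2) (p - 1)).
  assert (H3 := Rpower_pos c p).
  apply Rplus_lt_le_0_compat. apply Rmult_lt_0_compat; lra.
  left. repeat apply Rmult_lt_0_compat; lra.
Qed.

Lemma hc_1 p c : hc p c 1 = 1.
Proof.
  unfold hc, rpow. destruct (Rlt_dec 0 ((1 + 1) / 2)); [|lra]. destruct (Rlt_dec 0 ((1 - 1) / 2)); [lra|].
  replace ((1 + 1) / 2) with 1 by field. rewrite Rpower_1_base. ring.
Qed.

Lemma cont_eps f x0 : continuity_pt f x0 -> forall eps, 0 < eps -> exists d, 0 < d /\
  forall x, Rabs (x - x0) < d -> Rabs (f x - f x0) < eps.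
Proof.
  intros H eps He. destruct (H eps He) as [d [Hd Hx]]. exists d. split; auto.
  intros x Hxd. destruct (Req_dec x x0) as [->|Hne].
  - unfold Rminus. rewrite Rplus_opp_r, Rabs_R0. exact He.
  - apply (Hx x). split. split. exact I. auto. exact Hxd.
Qed.

Lemma hc_left p c : 1 < p -> 0 < c -> forall eps, 0 < eps -> exists d, 0 < d /\
  forall x, 1 - d < x < 1 -> Rabs (hc p c x - 1) < eps.
Proof.
  intros Hp Hc eps He.
  assert (Hcont : continuity_pt (fun s => Rpower ((1 + s) / 2) p) 1).
  { apply derivable_continuous_pt. exists (p * Rpower ((1 + 1) / 2) (p - 1) * / 2). apply D_up. lra. }
  destruct (cont_eps _ _ Hcont (eps / 2) ltac:(lra)) as [d1 [Hd1 H1]].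
  assert (HC := Rpower_pos c p). set (C := Rpower c p) in *.
  set (d := Rmin (Rmin d1 1) (eps / (C + 1))).
  assert (Hd0 : 0 < d) by (apply Rmin_pos; [apply Rmin_pos; lra| apply Rdiv_lt_0_compat; lra]).
  exists d. split; auto. intros x Hx.
  assert (Hda : d <= Rmin d1 1) by apply Rmin_l. assert (Hdb : Rmin d1 1 <= d1) by apply Rmin_l.
  assert (Hdc : Rmin d1 1 <= 1) by apply Rmin_r. assert (Hdd : d <= eps / (C + 1)) by apply Rmin_r.
  rewrite hc_eq by lra. fold C.
  specialize (H1 x ltac:(rewrite Rabs_left; lra)). simpl in H1.
  replace ((1 + 1) / 2) with 1 in H1 by field. rewrite Rpower_1_base in H1.
  assert (Hv : Rpower ((1 - x) / 2) p <= (1 - x) / 2).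
  { replace p with ((p - 1) + 1) at 1 by ring. rewrite Rpower_succ by lra.
    assert (Rpower ((1 - x) / 2) (p - 1) <= 1).
    { apply Rle_trans with (Rpower 1 (p - 1)); [apply Rle_Rpower_l; lra| rewrite Rpower_1_base; lra]. }
    assert (Rpower ((1 - x) / 2) (p - 1) * ((1 - x) / 2) <= 1 * ((1 - x) / 2)) by (apply Rmult_le_compat_r; lra). lra. }
  assert (Hv0 := Rpower_pos ((1 - x) / 2) p).
  assert (C * Rpower ((1 - x) / 2) p <= C * ((1 - x) / 2)) by (apply Rmult_le_compat_l; lra).
  assert (C * ((1 - x) / 2) < eps / 2).
  { assert (1 - x < eps / (C + 1)) by lra.
    apply (Rmult_lt_compat_l (C + 1)) in H0; [|lra].
    replace ((C + 1) * (eps / (C + 1))) with eps in H0 by (field; lra). nra. }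
  assert (0 <= C * Rpower ((1 - x) / 2) p) by (apply Rmult_le_pos; lra).
  apply Rabs_def2 in H1. apply Rabs_def1; lra.
Qed.


Lemma hpp_mono p c a b : 2 < p -> 0 < c -> -1 < a -> a < b -> b < 1 -> 0 < hpp p c a -> 0 < hpp p c b.
Proof.
  intros Hp Hc Ha Hab Hb H. rewrite hpp_sign in *.
  assert (Hk : 0 < p * (p - 1) / 4) by (apply Rdiv_lt_0_compat; nra).
  assert (HC := Rpower_pos c p).
  assert (H1 : Rpower c p * Rpower ((1 - a) / 2) (p - 2) < Rpower ((1 + a) / 2) (p - 2)).
  { destruct (Rlt_or_le (Rpower c p * Rpower ((1 - a) / 2) (p - 2)) (Rpower ((1 + a) / 2) (p - 2))) as [?|Hn]; auto.
    assert (p * (p - 1) / 4 * (Rpower ((1 + a) / 2) (p - 2) - Rpower c p * Rpower ((1 - a) / 2) (p - 2)) <= 0)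
      by (apply Rmult_le_0_l_helper; lra). lra. }
  assert (H2 : Rpower ((1 + a) / 2) (p - 2) < Rpower ((1 + b) / 2) (p - 2)) by (apply Rlt_Rpower_l; lra).
  assert (H3 : Rpower ((1 - b) / 2) (p - 2) < Rpower ((1 - a) / 2) (p - 2)) by (apply Rlt_Rpower_l; lra).
  assert (H4 : Rpower c p * Rpower ((1 - b) / 2) (p - 2) < Rpower c p * Rpower ((1 - a) / 2) (p - 2))
    by (apply Rmult_lt_compat_l; lra).
  apply Rmult_lt_0_compat; lra.
Qed.

Lemma h_below p c z dh : 2 < p -> -1 < z < 1 -> c = (1 + z) / (1 - z) -> dh = hp p c z ->
  1 <= p * Rpower ((1 + z) / 2) (p - 1) -> forall s, z <= s <= 1 -> hc p c s <= dh * (s - z).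
Proof.
  intros Hp Hz Hc Hdh Hk s Hs.
  assert (Hc0 : 0 < c) by (rewrite Hc; apply Rdiv_lt_0_compat; lra).
  assert (Hdh0 : 0 < dh) by (rewrite Hdh; apply hp_pos; lra).
  assert (Hd1 : dh * (1 - z) = p * Rpower ((1 + z) / 2) (p - 1)) by (rewrite Hdh, Hc; apply hp_z; auto).
  assert (Hhz : hc p c z = 0) by (rewrite Hc; apply hc_z; auto).
  destruct (Req_dec s 1) as [->|Hs1]. rewrite hc_1. lra.
  destruct (Req_dec s z) as [->|Hsz]. rewrite Hhz. lra.
  set (g := fun x => hc p c x - dh * (x - z)).
  assert (Dg : forall x, -1 < x < 1 -> derivable_pt_lim g x (hp p c x - dh)).
  { intros x Hx. unfold g. replace (hp p c x - dh) with (hp p c x - dh * (1 - 0)) by ring.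
    apply (derivable_pt_lim_minus (hc p c) (fun x => dh * (x - z))). apply D_hc; auto.
    apply (derivable_pt_lim_scal (fun x => x - z)).
    apply (derivable_pt_lim_minus id (fun _ => z)). apply derivable_pt_lim_id. apply derivable_pt_lim_const. }
  destruct (Rle_or_lt (g s) 0) as [Hg|Hg]. unfold g in Hg; lra. exfalso.
  destruct (MVT_cor2 g (fun x => hp p c x - dh) z s ltac:(lra)) as [x1 [Hx1 Hx1r]].
  { intros x Hx. apply Dg. lra. }
  assert (Hg1 : 0 < hp p c x1 - dh).
  { unfold g at 2 in Hx1. rewrite Hhz in Hx1. replace (z - z) with 0 in Hx1 by ring.
    assert (0 < (hp p c x1 - dh) * (s - z)) by lra.
    destruct (Rlt_or_le 0 (hp p c x1 - dh)) as [?|Hn]; auto.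
    assert ((hp p c x1 - dh) * (s - z) <= 0) by (rewrite Rmult_comm; apply Rmult_le_0_l_helper; lra). lra. }
  destruct (hc_left p c ltac:(lra) Hc0 (g s / 2) ltac:(lra)) as [d1 [Hd1p Hd1c]].
  set (m := Rmin (d1 / 2) (g s / (4 * dh))).
  assert (Hm1 : m <= d1 / 2) by apply Rmin_l. assert (Hm2 : m <= g s / (4 * dh)) by apply Rmin_r.
  assert (Hm0 : 0 < m) by (apply Rmin_pos; [lra| apply Rdiv_lt_0_compat; lra]).
  set (x := Rmax ((s + 1) / 2) (1 - m)).
  assert (Hxa : (s + 1) / 2 <= x) by apply Rmax_l. assert (Hxb : 1 - m <= x) by apply Rmax_r.
  assert (Hxc : x < 1) by (unfold x; apply Rmax_lub_lt; lra).
  assert (Hgx : g x < g s).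
  { specialize (Hd1c x ltac:(lra)). apply Rabs_def2 in Hd1c.
    assert (dh * (1 - x) <= g s / 4).
    { assert (1 - x <= g s / (4 * dh)) by lra.
      apply (Rmult_le_compat_l dh) in H; [|lra].
      replace (dh * (g s / (4 * dh))) with (g s / 4) in H by (field; lra). lra. }
    unfold g at 1. lra. }
  destruct (MVT_cor2 g (fun x => hp p c x - dh) s x ltac:(lra)) as [x2 [Hx2 Hx2r]].
  { intros y Hy. apply Dg. lra. }
  assert (Hg2 : hp p c x2 - dh < 0).
  { destruct (Rlt_or_le (hp p c x2 - dh) 0) as [?|Hn]; auto.
    assert (0 <= (hp p c x2 - dh) * (x - s)) by (apply Rmult_le_pos; lra). lra. }
  destruct (MVT_cor2 (hp p c) (hpp p c) z x1 ltac:(lra)) as [y1 [Hy1 Hy1r]].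
  { intros y Hy. apply D_hp. lra. }
  destruct (MVT_cor2 (hp p c) (hpp p c) x1 x2 ltac:(lra)) as [y2 [Hy2 Hy2r]].
  { intros y Hy. apply D_hp. lra. }
  assert (Hp1 : 0 < hpp p c y1).
  { rewrite <- Hdh in Hy1.
    destruct (Rlt_or_le 0 (hpp p c y1)) as [?|Hn]; auto.
    assert (hpp p c y1 * (x1 - z) <= 0) by (rewrite Rmult_comm; apply Rmult_le_0_l_helper; lra). lra. }
  assert (Hp2 := hpp_mono p c y1 y2 Hp Hc0 ltac:(lra) ltac:(lra) ltac:(lra) Hp1).
  assert (0 < hpp p c y2 * (x2 - x1)) by (apply Rmult_lt_0_compat; lra).
  lra.
Qed.


Theorem lemma5p5 (alpha p : R) (L L1 L2 : R -> R) (z c a dh : R) :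
  0 < alpha -> p = alpha * (alpha + 1) -> 2 < p ->
  is_legendre alpha L L1 L2 ->
  is_largest_zero L z ->
  c = (1 + z) / (1 - z) ->
  derivable_pt_lim (hc p c) z dh ->
  a = dh / L1 z ->
  (a * L z = 0 /\ hc p c z = 0 /\ L1 z <> 0 /\
   derivable_pt_lim (fun s => a * L s) z dh) /\
  (forall s, z <= s <= 1 ->
     hc p c s <= hc p c z + dh * (s - z) /\
     hc p c z + dh * (s - z) <= a * L s).
Proof.
  intros Hal Hp Hp2 Hleg Hlz Hc Hdh Ha.
  pose proof Hlz as [Hz [HLz Hnz]].
  assert (Hc0 : 0 < c) by (rewrite Hc; apply Rdiv_lt_0_compat; lra).
  assert (Edh : dh = hp p c z) by (apply (uniqueness_limite (hc p c) z); auto; apply D_hc; auto).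
  assert (Hdh0 : 0 < dh) by (rewrite Edh; apply hp_pos; lra).
  assert (HL1 : 0 < L1 z) by (apply (L1z_pos alpha L L1 L2 z); auto).
  assert (Ha0 : 0 < a) by (rewrite Ha; apply Rdiv_lt_0_compat; auto).
  assert (Hhz : hc p c z = 0) by (rewrite Hc; apply hc_z; auto).
  assert (Hk : 1 <= p * Rpower ((1 + z) / 2) (p - 1)) by (subst p; apply (key_ineq alpha L L1 L2 z); auto).
  split; [split; [|split; [|split]]|].
  - rewrite HLz; ring.
  - exact Hhz.
  - lra.
  - replace dh with (a * L1 z) by (rewrite Ha; field; lra).
    apply (derivable_pt_lim_scal L). destruct Hleg as [HD _]. apply HD; lra.
  - intros s Hs. rewrite Hhz, Rplus_0_l. split.
    + apply (h_below p c z dh); auto.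
    + destruct (Req_dec s 1) as [->|Hs1].
      * pose proof Hleg as [_ [Hlim HL1e]]. rewrite HL1e, Rmult_1_r.
        destruct (Rle_or_lt (dh * (1 - z)) a) as [?|Hlt]; auto. exfalso.
        set (e := dh * (1 - z) - a).
        destruct (Hlim (e / (2 * a)) ltac:(apply Rdiv_lt_0_compat; unfold e; lra)) as [d [Hd Hd']].
        set (m := Rmin (d / 2) (Rmin (e / (4 * dh)) (1 - z))).
        assert (Hm1 : m <= d / 2) by apply Rmin_l.
        assert (Hm2 : m <= Rmin (e / (4 * dh)) (1 - z)) by apply Rmin_r.
        assert (Hm3 : Rmin (e / (4 * dh)) (1 - z) <= e / (4 * dh)) by apply Rmin_l.
        assert (Hm4 : Rmin (e / (4 * dh)) (1 - z) <= 1 - z) by apply Rmin_r.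
        assert (Hm0 : 0 < m) by (apply Rmin_pos; [lra| apply Rmin_pos; [apply Rdiv_lt_0_compat; unfold e; lra| lra]]).
        set (x := 1 - m / 2).
        specialize (Hd' x ltac:(unfold x; lra)). apply Rabs_def2 in Hd'.
        assert (Hab := L_above alpha L L1 L2 z Hal ltac:(subst p; lra) Hleg Hlz x ltac:(unfold x; lra)).
        assert (E1 : a * (L1 z * (x - z)) = dh * (x - z)) by (rewrite Ha; field; lra).
        assert (a * (L1 z * (x - z)) <= a * L x) by (apply Rmult_le_compat_l; lra).
        assert (a * (L x - 1) < e / 2).
        { assert (Q1 : a * (L x - 1) < a * (e / (2 * a))) by (apply Rmult_lt_compat_l; lra).
          replace (a * (e / (2 * a))) with (e / 2) in Q1 by (field; lra). lra. }
        assert (dh * (1 - x) <= e / 4).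
        { assert (Q2 : 1 - x <= e / (4 * dh)) by (unfold x; lra).
          apply (Rmult_le_compat_l dh) in Q2; [|lra].
          replace (dh * (e / (4 * dh))) with (e / 4) in Q2 by (field; lra). lra. }
        unfold e in *. nra.
      * assert (Hab := L_above alpha L L1 L2 z Hal ltac:(subst p; lra) Hleg Hlz s ltac:(lra)).
        replace dh with (a * L1 z) by (rewrite Ha; field; lra).
        rewrite Rmult_assoc. apply Rmult_le_compat_l; lra.
Qed.
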